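(* Let $X$ be a compact metric space with metric $d$ and let $M\ge1$. If an $M$-Lipschitz continuous map $f\colon X\to X$ satisfies $X=CR(f)$ and has the $L$-Lipschitz shadowing property for some $0<L<M^{-1}$, then $X$ is a finite set.
   Context: A map $f\colon X\to X$ is $M$-Lipschitz continuous if there is $\delta_0>0$ such that $d(f(x),f(y))\le Md(x,y)$ for all $x,y\in X$ with $d(x,y)\le\delta_0$. For $\delta>0$, a sequence $(x_i)_{i\ge0}$ is a $\delta$-pseudo orbit of $f$ if $d(f(x_i),x_{i+1})\le\delta$ for all $i\ge0$; it is $\epsilon$-shadowed by $x$ if $d(f^i(x),x_i)\le\epsilon$ for all $i\ge0$. For $L>0$, $f$ has the $L$-Lipschitz shadowing property if there is $\delta_0>0$ such that for every $0<\delta\le\delta_0$, every $\delta$-pseudo orbit of $f$ is $L\delta$-shadowed by some point of $X$. A $\delta$-chain is a finite sequence $(x_i)_{i=0}^k$, $k\ge1$, with $d(f(x_i),x_{i+1})\le\delta$ for $0\le i\le k-1$; a $\delta$-cycle is a $\delta$-chain with $x_0=x_k$. $CR(f)$ is the set of $x\in X$ such that for every $\delta>0$ there is a $\delta$-cycle with $x_0=x_k=x$. *)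

(* Defs.v *)
From Stdlib Require Import Reals List.
Open Scope R_scope.

Definition is_metric {X : Type} (d : X -> X -> R) : Prop :=
  (forall x y, 0 <= d x y) /\
  (forall x y, d x y = 0 <-> x = y) /\
  (forall x y, d x y = d y x) /\
  (forall x y z, d x z <= d x y + d y z).

Definition metric_open {X : Type} (d : X -> X -> R) (U : X -> Prop) : Prop :=
  forall x, U x -> exists r, 0 < r /\ forall y, d x y < r -> U y.

Definition metric_compact {X : Type} (d : X -> X -> R) : Prop :=
  forall (I : Type) (U : I -> X -> Prop),
    (forall i, metric_open d (U i)) ->
    (forall x, exists i, U i x) ->
    exists l : list I, forall x, exists i, In i l /\ U i x.

Definition M_Lipschitz {X : Type} (d : X -> X -> R) (f : X -> X) (M : R) : Prop :=
  exists delta0, 0 < delta0 /\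
    forall x y, d x y <= delta0 -> d (f x) (f y) <= M * d x y.

Definition pseudo_orbit {X : Type} (d : X -> X -> R) (f : X -> X) (delta : R)
  (xs : nat -> X) : Prop :=
  forall i, d (f (xs i)) (xs (S i)) <= delta.

Definition shadowed {X : Type} (d : X -> X -> R) (f : X -> X) (eps : R)
  (xs : nat -> X) (x : X) : Prop :=
  forall i, d (Nat.iter i f x) (xs i) <= eps.

Definition Lipschitz_shadowing {X : Type} (d : X -> X -> R) (f : X -> X) (L : R) : Prop :=
  exists delta0, 0 < delta0 /\
    forall delta, 0 < delta -> delta <= delta0 ->
      forall xs, pseudo_orbit d f delta xs ->
        exists x, shadowed d f (L * delta) xs x.

Definition delta_cycle_at {X : Type} (d : X -> X -> R) (f : X -> X) (delta : R) (x : X) : Prop :=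
  exists (k : nat) (xs : nat -> X),
    (1 <= k)%nat /\ xs 0%nat = x /\ xs k = x /\
    forall i, (i < k)%nat -> d (f (xs i)) (xs (S i)) <= delta.

Definition chain_recurrent {X : Type} (d : X -> X -> R) (f : X -> X) (x : X) : Prop :=
  forall delta, 0 < delta -> delta_cycle_at d f delta x.

Definition finite_type (X : Type) : Prop :=
  exists l : list X, forall x, In x l.

(* Main.v *)
Require Import Defs.
From Stdlib Require Import Reals.
From Stdlib Require Import Lra Lia Arith.
Open Scope R_scope.

Lemma lip_iter (X : Type) (d : X -> X -> R) (f : X -> X) (M dL : R) :
  (forall x y, 0 <= d x y) -> 1 <= M ->
  (forall x y, d x y <= dL -> d (f x) (f y) <= M * d x y) ->
  forall i u v r, d u v <= r -> M ^ i * r <= dL ->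
    d (Nat.iter i f u) (Nat.iter i f v) <= M ^ i * r.
Proof.
  intros Hpos HM Hlip i; induction i as [|i IH]; intros u v r Huv Hr.
  - simpl. lra.
  - change (Nat.iter (S i) f u) with (f (Nat.iter i f u)).
    change (Nat.iter (S i) f v) with (f (Nat.iter i f v)).
    change (M ^ S i) with (M * M ^ i) in *.
    assert (Hr0 : 0 <= r) by (specialize (Hpos u v); lra).
    assert (HMi : 1 <= M ^ i) by (apply pow_R1_Rle; lra).
    replace (M * M ^ i * r) with (M * (M ^ i * r)) in * by ring.
    set (A := M ^ i * r) in *.
    assert (HA0 : 0 <= A) by (unfold A; apply Rmult_le_pos; lra).
    assert (HA : A <= M * A) by (rewrite <- (Rmult_1_l A) at 1; apply Rmult_le_compat_r; lra).
    assert (HAd : A <= dL) by lra.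
    assert (Hi : d (Nat.iter i f u) (Nat.iter i f v) <= A) by exact (IH u v r Huv HAd).
    assert (Hd := Hlip (Nat.iter i f u) (Nat.iter i f v) ltac:(lra)).
    assert (M * d (Nat.iter i f u) (Nat.iter i f v) <= M * A) by
      (apply Rmult_le_compat_l; lra).
    lra.
Qed.

Lemma approx_image (X : Type) (d : X -> X -> R) (f : X -> X) (M dL : R) :
  (forall x y, 0 <= d x y) -> (forall x, d x x = 0) -> (forall x y, d x y = d y x) ->
  (forall x y z, d x z <= d x y + d y z) -> 1 <= M -> 0 < dL ->
  (forall x y, d x y <= dL -> d (f x) (f y) <= M * d x y) ->
  (forall x, chain_recurrent d f x) ->
  forall m y eta, 0 < eta -> exists c, d (Nat.iter m f c) y <= eta.
Proof.
  intros Hpos H0 Hsym Htri HM HdL Hlip HCR m; induction m as [|m IH]; intros y eta Heta.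
  - exists y. simpl. rewrite H0. lra.
  - destruct (HCR y (eta/2) ltac:(lra)) as [k [xs [Hk [Hx0 [Hxk Hj]]]]].
    set (p := xs (k - 1)%nat).
    assert (Hp : d (f p) y <= eta / 2).
    { unfold p. rewrite <- Hxk. replace k with (S (k - 1)) at 2 by lia. apply Hj. lia. }
    set (e' := Rmin dL (eta / (2 * M))).
    assert (He'1 : e' <= dL) by apply Rmin_l.
    assert (He'2 : e' <= eta / (2 * M)) by apply Rmin_r.
    assert (He'0 : 0 < e').
    { unfold e'. apply Rmin_pos; [lra|]. apply Rdiv_lt_0_compat; lra. }
    destruct (IH p e' He'0) as [c Hc].
    exists c.
    change (Nat.iter (S m) f c) with (f (Nat.iter m f c)).
    assert (H1 := Hlip (Nat.iter m f c) p ltac:(lra)).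
    assert (M * d (Nat.iter m f c) p <= M * e') by (apply Rmult_le_compat_l; lra).
    assert (M * e' <= eta / 2).
    { assert (M * (eta / (2 * M)) = eta / 2) by (field; lra).
      assert (M * e' <= M * (eta / (2 * M))) by (apply Rmult_le_compat_l; lra). lra. }
    specialize (Htri (f (Nat.iter m f c)) (f p) y). lra.
Qed.

Lemma push (X : Type) (d : X -> X -> R) (f : X -> X) (L dS s : R) (t : nat) (x b : X) :
  (forall x y, 0 <= d x y) -> (forall x, d x x = 0) -> (forall x y, d x y = d y x) ->
  0 < L -> L <= 1 ->
  (forall delta, 0 < delta -> delta <= dS ->
      forall xs, pseudo_orbit d f delta xs -> exists w, shadowed d f (L * delta) xs w) ->
  0 < s -> s <= dS -> d (Nat.iter t f x) b = s ->
  forall n, (n <= t)%nat -> exists z,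
    d (Nat.iter (t - n) f z) (Nat.iter (t - n) f x) <= L ^ n * s /\
    d (Nat.iter t f z) b <= L ^ n * s.
Proof.
  intros Hpos H0 Hsym HL HL1 Hsh Hs HsS Hts n.
  induction n as [|n IH]; intros Hn.
  - exists x. rewrite Nat.sub_0_r, H0. simpl. lra.
  - destruct (IH ltac:(lia)) as [z [Hz1 Hz2]].
    set (ys := fun i => if (i <? t - n)%nat then Nat.iter i f x
                        else if (i <? t)%nat then Nat.iter i f z
                        else Nat.iter (i - t) f b).
    assert (HLn1 : L ^ n <= 1) by (rewrite <- (pow1 n); apply pow_incr; lra).
    assert (HLn0 : 0 < L ^ n) by (apply pow_lt; lra).
    assert (Hdel0 : 0 < L ^ n * s) by (apply Rmult_lt_0_compat; lra).
    assert (Hdel1 : L ^ n * s <= dS).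
    { assert (L ^ n * s <= 1 * s) by (apply Rmult_le_compat_r; lra). lra. }
    assert (Hpo : pseudo_orbit d f (L ^ n * s) ys).
    { intro i. unfold ys.
      destruct (Nat.ltb_spec i (t - n)); destruct (Nat.ltb_spec (S i) (t - n));
      destruct (Nat.ltb_spec i t); destruct (Nat.ltb_spec (S i) t);
      try lia;
      try change (f (Nat.iter i f x)) with (Nat.iter (S i) f x);
      try change (f (Nat.iter i f z)) with (Nat.iter (S i) f z); try (rewrite H0; lra).
      - replace (S i) with (t - n)%nat by lia. rewrite Hsym. exact Hz1.
      - assert (Hn0 : n = 0%nat) by lia. assert (Hst : S i = t) by lia. subst n.
        replace (S i - t)%nat with 0%nat by lia.
        rewrite Hst. simpl (Nat.iter 0 f b). rewrite Hts. simpl. lra.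
      - assert (Hst : S i = t) by lia. replace (S i - t)%nat with 0%nat by lia.
        rewrite Hst. simpl (Nat.iter 0 f b). exact Hz2.
      - replace (S i - t)%nat with (S (i - t)) by lia. simpl. rewrite H0. lra. }
    destruct (Hsh _ Hdel0 Hdel1 ys Hpo) as [w Hw].
    exists w. split.
    + assert (Hw1 := Hw (t - S n)%nat). unfold ys in Hw1.
      destruct (Nat.ltb_spec (t - S n) (t - n)); [|lia].
      simpl (L ^ S n). replace (L * L ^ n * s) with (L * (L ^ n * s)) by ring. exact Hw1.
    + assert (Hw2 := Hw t). unfold ys in Hw2.
      destruct (Nat.ltb_spec t (t - n)); [lia|].
      destruct (Nat.ltb_spec t t); [lia|].
      rewrite Nat.sub_diag in Hw2. simpl in Hw2.
      simpl (L ^ S n). replace (L * L ^ n * s) with (L * (L ^ n * s)) by ring. exact Hw2.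
Qed.

Theorem theorem1p3 (X : Type) (d : X -> X -> R) (f : X -> X) (M L : R) :
  is_metric d ->
  metric_compact d ->
  1 <= M ->
  M_Lipschitz d f M ->
  (forall x, chain_recurrent d f x) ->
  0 < L -> L < / M ->
  Lipschitz_shadowing d f L ->
  finite_type X.
Proof.
  intros Hmet Hcomp HM [dL [HdL Hlip]] HCR HL HLM [dS [HdS Hsh]].
  destruct Hmet as [Hpos [Hz [Hsym Htri]]].
  assert (H0 : forall x, d x x = 0) by (intro x; apply Hz; reflexivity).
  assert (HML : M * L < 1).
  { assert (M * L < M * / M) by (apply Rmult_lt_compat_l; lra).
    rewrite Rinv_r in H by lra. exact H. }
  assert (HLML : L <= M * L).
  { rewrite <- (Rmult_1_l L) at 1. apply Rmult_le_compat_r; lra. }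
  assert (HL1 : L <= 1) by lra.
  destruct (pow_lt_1_zero (M * L) ltac:(rewrite Rabs_pos_eq; nra) (1/2) ltac:(lra))
    as [N HN].
  specialize (HN N (le_n N)).
  rewrite Rabs_pos_eq in HN by (apply pow_le; nra).
  set (s0 := Rmin dS dL).
  assert (Hs0 : 0 < s0) by (apply Rmin_pos; lra).
  assert (Hs0S : s0 <= dS) by apply Rmin_l.
  assert (Hs0L : s0 <= dL) by apply Rmin_r.
  assert (F : forall x b, d (Nat.iter N f x) b <= s0 -> b = Nat.iter N f x).
  { intros x b Hb.
    destruct (Req_dec (d (Nat.iter N f x) b) 0) as [E|E].
    { symmetry. apply Hz. exact E. }
    exfalso.
    set (s := d (Nat.iter N f x) b) in *.
    assert (Hs : 0 < s) by (specialize (Hpos (Nat.iter N f x) b); unfold s in *; lra).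
    destruct (push X d f L dS s N x b Hpos H0 Hsym HL HL1 Hsh Hs ltac:(lra)
                eq_refl N (le_n N)) as [z [Hz1 Hz2]].
    rewrite Nat.sub_diag in Hz1. simpl in Hz1.
    assert (HP0 : 0 <= (M * L) ^ N) by (apply pow_le; nra).
    assert (HQ : L ^ N <= (M * L) ^ N) by (apply pow_incr; lra).
    assert (HQ0 : 0 <= L ^ N) by (apply pow_le; lra).
    assert (HPs : (M * L) ^ N * s < s / 2).
    { assert ((M * L) ^ N * s < (1/2) * s) by (apply Rmult_lt_compat_r; lra). lra. }
    assert (Hlipz : d (Nat.iter N f z) (Nat.iter N f x) <= M ^ N * (L ^ N * s)).
    { apply (lip_iter X d f M dL Hpos HM Hlip N z x (L ^ N * s) Hz1).
      rewrite <- Rmult_assoc, <- Rpow_mult_distr. lra. }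
    rewrite <- Rmult_assoc, <- Rpow_mult_distr in Hlipz.
    assert (L ^ N * s <= (M * L) ^ N * s) by (apply Rmult_le_compat_r; lra).
    assert (Htr := Htri (Nat.iter N f x) (Nat.iter N f z) b).
    rewrite Hsym in Hlipz. fold s in Htr. lra. }
  assert (G : forall y y', d y y' < s0 / 2 -> y = y').
  { intros y y' Hyy.
    destruct (approx_image X d f M dL Hpos H0 Hsym Htri HM HdL Hlip HCR N y (s0/2)
                ltac:(lra)) as [c Hc].
    assert (E1 := F c y ltac:(lra)).
    assert (E2 : y' = Nat.iter N f c).
    { apply F. rewrite <- E1. lra. }
    congruence. }
  destruct (Hcomp X (fun i y => d i y < s0 / 2)) as [l Hl].
  - intros i y Hy. exists (s0 / 2 - d i y). split; [lra|].
    intros y' Hy'. specialize (Htri i y y'). lra.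
  - intros x. exists x. rewrite H0. lra.
  - exists l. intros x. destruct (Hl x) as [i [Hin Hi]].
    rewrite <- (G i x Hi). exact Hin.
Qed.
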